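(* Consider the following kinetic transport model. Let $\{Z_k\}_{k\ge1}$ be a Markov chain on the two states $\{\mathrm{F},\mathrm{A}\}$ with initial distribution $\lambda=(\lambda_{\mathrm F},\lambda_{\mathrm A})$ and transition matrix $$\begin{pmatrix}1-a & a\\ b & 1-b\end{pmatrix}$$ (rows and columns indexed by $\mathrm F,\mathrm A$), $a,b\in[0,1]$. Let $K_n=\sum_{k=1}^n \mathbf 1_{\{Z_k=\mathrm F\}}$ and $f_n(k)=P(K_n=k)$. Independently of $\{Z_k\}$, let $(X_k,Y_k)_{k\ge1}$ be i.i.d. with $$P((X_k,Y_k)=(1,j))=\alpha,\qquad P((X_k,Y_k)=(-1,j))=\beta\qquad (j=\pm1),$$ where $\alpha,\beta\ge0$, $\alpha+\beta=1/2$. Let $\tilde S(n)=(\tilde S_X(n),\tilde S_Y(n))=\sum_{k=1}^{K_n}(X_k+1,Y_k)$. Then for $n\ge1$, $0\le x\le n$ and $-n\le y\le n$, $$P(\tilde S(n)=(2x,y))=\sum_{k=x}^n f_n(k)\binom{k}{x}\binom{k}{\frac{k+y}{2}}\alpha^x\beta^{k-x},$$ and (whenever $P(\tilde S_X(n)=2x)>0$) $$\operatorname{Var}(\tilde S_Y(n)\mid \tilde S_X(n)=2x)=\frac{\sum_{k=x}^n k\,f_n(k)\binom{k}{x}(2\alpha)^x(2\beta)^{k-x}}{\sum_{k=x}^n f_n(k)\binom{k}{x}(2\alpha)^x(2\beta)^{k-x}}.$$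
   Context: The binomial coefficient $\binom{k}{m}$ is taken to be $0$ when $m$ is not an integer in $\{0,\dots,k\}$ (so only $k\equiv y \pmod 2$ contribute in the first formula). *)

(* Defs.v *)
From HB Require Import structures.
From mathcomp Require Import all_boot all_order all_algebra.
Set Implicit Arguments. Unset Strict Implicit. Unset Printing Implicit Defensive.
Import Order.TTheory GRing.Theory Num.Theory.
Local Open Scope ring_scope.

(* sample space of the first n steps: the chain Z_1..Z_n and n i.i.d. steps
   (X_1,Y_1)..(X_n,Y_n); only the first K_n <= n steps are used *)
Definition Omega (n : nat) : finType :=
  (n.-tuple bool * n.-tuple (bool * bool))%type.

Definition sgn1 (b : bool) : int := if b then 1 else -1.

Definition Kn (n : nat) (w : Omega n) : nat := count id w.1.

Definition SX (n : nat) (w : Omega n) : int :=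
  \sum_(i < n | (i < Kn w)%N) (sgn1 (tnth w.2 i).1 + 1).
Definition SY (n : nat) (w : Omega n) : int :=
  \sum_(i < n | (i < Kn w)%N) sgn1 (tnth w.2 i).2.

(* binomial coefficient C(k, (k+y)/2), taken to be 0 unless (k+y)/2 is an
   integer in {0..k} *)
Definition binhalf (k : nat) (y : int) : nat :=
  match (k%:Z + y)%R with
  | Posz m => if odd m then 0%N else 'C(k, m./2)
  | Negz _ => 0%N
  end.

Section Model.
Variable R : realFieldType.
Variables (lamF lamA a b al be : R).

(* state encoding: true = F, false = A *)
Definition init_prob (s : bool) : R := if s then lamF else lamA.

Definition trans_prob (s t : bool) : R :=
  match s, t with
  | true, true => 1 - a
  | true, false => a
  | false, true => b
  | false, false => 1 - b
  end.

(* P(Z_1 = z_1, ..., Z_n = z_n) for n >= 1 (z_{i+1} is stored at index i) *)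
Definition chain_prob (n : nat) (z : n.-tuple bool) : R :=
  init_prob (nth true z 0) *
  \prod_(0 <= i < n.-1) trans_prob (nth true z i) (nth true z i.+1).

(* a step (X,Y) is encoded as (X == 1, Y == 1) *)
Definition step_prob (s : bool * bool) : R := if s.1 then al else be.

Definition weight (n : nat) (w : Omega n) : R :=
  chain_prob w.1 * \prod_(i < n) step_prob (tnth w.2 i).

Definition Prob (n : nat) (E : pred (Omega n)) : R :=
  \sum_(w : Omega n | E w) weight w.

Definition condE (n : nat) (g : Omega n -> R) (B : pred (Omega n)) : R :=
  (\sum_(w : Omega n | B w) weight w * g w) / Prob B.

Definition condVar (n : nat) (g : Omega n -> R) (B : pred (Omega n)) : R :=
  condE (fun w => g w ^+ 2) B - (condE g B) ^+ 2.

End Model.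

Definition fn (R : realFieldType) (lamF lamA a b al be : R) (n k : nat) : R :=
  Prob lamF lamA a b al be [pred w : Omega n | Kn w == k].

(* Main.v *)
Require Import Defs.
From HB Require Import structures.
From mathcomp Require Import all_boot all_order all_algebra.
From mathcomp Require Import zify ring lra.
Set Implicit Arguments. Unset Strict Implicit. Unset Printing Implicit Defensive.
Import Order.TTheory GRing.Theory Num.Theory.
Local Open Scope ring_scope.

Lemma sum_tuple_cons (R : nmodType) (T : finType) n (F : n.+1.-tuple T -> R) :
  \sum_(s : n.+1.-tuple T) F s = \sum_(t : T) \sum_(s : n.-tuple T) F [tuple of t :: s].
Proof.
rewrite pair_big /=.
rewrite (reindex (fun p : T * n.-tuple T => [tuple of p.1 :: p.2])) //=.
exists (fun s : n.+1.-tuple T => (thead s, [tuple of behead s])).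
  by move=> [t s] _ /=; congr pair; apply: val_inj.
by move=> s _ /=; rewrite [RHS]tuple_eta.
Qed.

Definition cX (s : seq (bool * bool)) : nat := count (fun p => p.1) s.
Definition sY (s : seq (bool * bool)) : int := \sum_(p <- s) sgn1 p.2.

Definition bf k (m : int) : nat :=
  match m with Posz p => if odd p then 0%N else 'C(k, p./2) | Negz _ => 0%N end.

Lemma bhE k y : binhalf k y = bf k (k%:Z + y).
Proof. by []. Qed.

Lemma bfS k m : bf k.+1 m = (bf k (m - 2) + bf k m)%N.
Proof.
case: m => [[|[|p]]|p] /=.
- by rewrite !bin0.
- by [].
- rewrite (_ : (p.+2 - (0 + 1).+1 = p)%N); last by lia.
  rewrite !negbK; case: (odd p) => //.
  by rewrite binS addnC.
- by [].
Qed.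

Section G.
Variables (R : realFieldType) (al be : R).
Hypothesis Hab : al + be = 2^-1.

Definition G n k (h : nat -> int -> R) :=
  \sum_(s : n.-tuple (bool * bool))
     (\prod_(i < n) step_prob al be (tnth s i)) * h (cX (take k s)) (sY (take k s)).

Lemma sum_step (F : bool * bool -> R) :
  \sum_(t : bool * bool) F t = F (true,true) + F (true,false) + F (false,true) + F (false,false).
Proof.
have := pair_bigA +%R (fun a b => F (a, b)).
rewrite big_bool /= !big_bool /= => H.
rewrite -addrA H; by apply: eq_bigr => -[].
Qed.

Lemma sum_prod n : \sum_(s : n.-tuple (bool * bool)) \prod_(i < n) step_prob al be (tnth s i) = 1.
Proof.
elim: n => [|n IH].
  under eq_bigr do rewrite big_ord0.
  by rewrite sumr_const card_tuple expn0.
rewrite sum_tuple_cons.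
under eq_bigr => t _.
  under eq_bigr => s _ do rewrite big_ord_recl /=.
  rewrite -mulr_sumr.
  under eq_bigr => s _ do under eq_bigr => i _ do rewrite (tnth_nth (true,true)) /= -tnth_nth.
  rewrite IH mulr1.
  over.
rewrite sum_step /step_prob /=.
have -> : al + al + be + be = 2 * (al + be) by ring.
by rewrite Hab mulfV // pnatr_eq0.
Qed.


Definition ind (b : bool) : R := b%:R.

Lemma indS_eq (a y y' : int) : (a + y' == y) = (y' == y - a).
Proof. by apply/idP/idP => /eqP H; apply/eqP; lia. Qed.

Lemma G0 n h : G n 0 h = h 0%N 0.
Proof.
rewrite /G (eq_bigr (fun s => (\prod_(i < n) step_prob al be (tnth s i)) * h 0%N 0)).
  by rewrite -mulr_suml sum_prod mul1r.
by move=> s _; rewrite take0 /sY big_nil.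
Qed.

Lemma GS n k h : G n.+1 k.+1 h =
  \sum_(t : bool * bool) step_prob al be t *
     G n k (fun c y => h (t.1 + c)%N (sgn1 t.2 + y)).
Proof.
rewrite /G sum_tuple_cons; apply: eq_bigr => t _.
rewrite mulr_sumr; apply: eq_bigr => s _.
rewrite big_ord_recl /=.
under eq_bigr => i _ do rewrite (tnth_nth (true,true)) /= -tnth_nth.
by rewrite /cX /sY /= big_cons mulrA.
Qed.

Lemma Gext n k h1 h2 : (forall c y, h1 c y = h2 c y) -> G n k h1 = G n k h2.
Proof. by move=> E; apply: eq_bigr => s _; rewrite E. Qed.

Lemma GD n k h1 h2 : G n k (fun c y => h1 c y + h2 c y) = G n k h1 + G n k h2.
Proof. by rewrite /G -big_split; apply: eq_bigr => s _; rewrite mulrDr. Qed.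

Lemma GZ n k a h : G n k (fun c y => a * h c y) = a * G n k h.
Proof. by rewrite /G mulr_sumr; apply: eq_bigr => s _; rewrite mulrCA. Qed.

Lemma G_0 n k : G n k (fun _ _ => 0) = 0.
Proof. by rewrite /G big1 // => s _; rewrite mulr0. Qed.


Lemma GA k : forall n x y, (k <= n)%N ->
  G n k (fun c y' => ((c == x) && (y' == y))%:R)
  = ('C(k, x))%:R * (binhalf k y)%:R * al ^+ x * be ^+ (k - x).
Proof.
elim: k => [|k IH] n x y Hk.
  rewrite G0 bhE /=.
  case: x => [|x] /=; last by rewrite bin0n !mul0r.
  rewrite bin0 !expr0 !mulr1 mul1r eq_sym.
  case: y => [[|[|p]]|p] //=.
  by case: odd.
case: n Hk => [//|n] Hk.
have E0 a x0 : G n k (fun c y0 => (((0 + c)%N == x0) && (a + y0 == y))%:R)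
    = 'C(k, x0)%:R * (binhalf k (y - a))%:R * al ^+ x0 * be ^+ (k - x0).
  by rewrite -(IH n) //; apply: Gext => c y0; rewrite add0n indS_eq.
have E1 a : G n k (fun c y0 => (((1 + c)%N == x) && (a + y0 == y))%:R)
    = if x is x'.+1 then 'C(k, x')%:R * (binhalf k (y - a))%:R * al ^+ x' * be ^+ (k - x')
      else 0.
  case: x => [|x'].
    by rewrite -(G_0 n k); apply: Gext => c y0; rewrite add1n.
  by rewrite -(IH n) //; apply: Gext => c y0; rewrite add1n eqSS indS_eq.
rewrite GS sum_step /= !E0 !E1 /step_prob /= {E0 E1}.
have e1 : (k%:Z + (y - 1) = k.+1%:Z + y - 2)%R by lia.
have e2 : (k%:Z + (y - -1) = k.+1%:Z + y)%R by lia.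
rewrite !bhE e1 e2 bfS natrD.
case: x => [|x'].
  rewrite !bin0 !subn0 exprS; ring.
rewrite binS natrD subSS.
case: (ltnP x' k) => hx.
  rewrite -(subnSK hx) !exprS; ring.
rewrite (bin_small (n:=k) (m:=x'.+1)) ?ltnS // !exprS; ring.
Qed.



Definition Gp n k x (g : int -> R) :=
  if x is x'.+1 then G n k (fun c y => (c == x')%:R * g y) else 0.

Lemma GSind n k x (f : int -> R) :
  G n.+1 k.+1 (fun c y => (c == x)%:R * f y) =
  al * (Gp n k x (fun y => f (1 + y)) + Gp n k x (fun y => f (-1 + y)))
  + be * (G n k (fun c y => (c == x)%:R * f (1 + y))
          + G n k (fun c y => (c == x)%:R * f (-1 + y))).
Proof.
rewrite GS sum_step /step_prob /=.
have E0 a : G n k (fun c y0 => ((0 + c)%N == x)%:R * f (a + y0))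
   = G n k (fun c y0 => (c == x)%:R * f (a + y0)).
  by apply: Gext => c y0; rewrite add0n.
have E1 a : G n k (fun c y0 => ((1 + c)%N == x)%:R * f (a + y0))
   = Gp n k x (fun y => f (a + y)).
  rewrite /Gp; case: x {E0} => [|x'].
    by rewrite -(G_0 n k); apply: Gext => c y0; rewrite add1n mul0r.
  by apply: Gext => c y0; rewrite add1n eqSS.
rewrite !E0 !E1; ring.
Qed.

Lemma GB k : forall n x, (k <= n)%N ->
  G n k (fun c y => (c == x)%:R * 1) = ('C(k, x))%:R * (2 * al) ^+ x * (2 * be) ^+ (k - x).
Proof.
elim: k => [|k IH] n x Hk.
  rewrite G0; case: x => [|x] /=; last by rewrite bin0n !mul0r.
  by rewrite bin0 !expr0 !mulr1.
case: n Hk => [//|n] Hk.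
rewrite GSind /Gp.
case: x => [|x'].
  rewrite !IH // !bin0 !subn0 exprS; ring.
rewrite !IH // binS natrD subSS.
case: (ltnP x' k) => hx.
  rewrite -(subnSK hx) !exprS; ring.
rewrite (bin_small (n:=k) (m:=x'.+1)) ?ltnS // !exprS; ring.
Qed.

Lemma Gsym1 n k x :
  G n k (fun c y => (c == x)%:R * (1 + y)%:~R) + G n k (fun c y => (c == x)%:R * (-1 + y)%:~R)
  = 2 * G n k (fun c y => (c == x)%:R * y%:~R).
Proof.
rewrite -GD -GZ; apply: Gext => c y; rewrite !intrD; ring.
Qed.

Lemma GDz k : forall n x, (k <= n)%N ->
  G n k (fun c y => (c == x)%:R * y%:~R) = 0.
Proof.
elim: k => [|k IH] n x Hk.
  by rewrite G0 mulr0.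
case: n Hk => [//|n] Hk.
rewrite GSind /Gp.
case: x => [|x']; first by rewrite Gsym1 IH // addr0 !mulr0 addr0.
by rewrite !Gsym1 !IH // !mulr0 addr0.
Qed.

Lemma Gsym2 n k x :
  G n k (fun c y => (c == x)%:R * ((1 + y)%:~R) ^+ 2)
  + G n k (fun c y => (c == x)%:R * ((-1 + y)%:~R) ^+ 2)
  = 2 * G n k (fun c y => (c == x)%:R * (y%:~R) ^+ 2) + 2 * G n k (fun c y => (c == x)%:R * 1).
Proof.
rewrite -GD -!GZ -GD; apply: Gext => c y; rewrite !intrD; ring.
Qed.

Lemma GC k : forall n x, (k <= n)%N ->
  G n k (fun c y => (c == x)%:R * (y%:~R) ^+ 2) = k%:R * G n k (fun c y => (c == x)%:R * 1).
Proof.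
elim: k => [|k IH] n x Hk.
  by rewrite G0 expr0n /= mulr0 mul0r.
case: n Hk => [//|n] Hk.
rewrite (GSind n k x (fun y => (y%:~R) ^+ 2)) (GSind n k x (fun _ => 1)) /Gp.
case: x => [|x'].
  rewrite Gsym2 IH // -addn1 natrD; ring.
rewrite !Gsym2 !IH // -addn1 natrD; ring.
Qed.

End G.

Lemma sum_take n (s : n.-tuple (bool * bool)) K (f : bool * bool -> int) :
  (K <= n)%N ->
  \sum_(i < n | (i < K)%N) f (tnth s i) = \sum_(p <- take K s) f p.
Proof.
move=> HK.
under eq_bigr => i _ do rewrite (tnth_nth (true,true) s i).
rewrite (big_nth (true,true)) size_takel ?size_tuple //.
rewrite -(big_mkord (fun i => (i < K)%N) (fun i => f (nth (true,true) s i))).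
rewrite (big_nat_widen 0 K n xpredT) //.
rewrite big_nat_cond [RHS]big_nat_cond.
apply: eq_bigr => i /andP[/andP[_ hi] hK].
by rewrite nth_take.
Qed.

Lemma sum_cX (l : seq (bool * bool)) :
  \sum_(p <- l) (sgn1 p.1 + 1) = 2 * (cX l)%:Z.
Proof.
elim: l => [|p l IH]; first by rewrite big_nil.
rewrite big_cons IH /cX /=; case: p.1 => /=; lia.
Qed.

Lemma Kn_le n (w : Omega n) : (Kn w <= n)%N.
Proof. by rewrite /Kn -[X in (_ <= X)%N](size_tuple w.1) count_size. Qed.

Lemma SXE n (w : Omega n) : SX w = 2 * (cX (take (Kn w) w.2))%:Z.
Proof. by rewrite /SX (@sum_take n w.2 (Kn w) (fun p => sgn1 p.1 + 1)) ?Kn_le // sum_cX. Qed.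

Lemma SYE n (w : Omega n) : SY w = sY (take (Kn w) w.2).
Proof. by rewrite /SY (@sum_take n w.2 (Kn w) (fun p => sgn1 p.2)) ?Kn_le. Qed.

Section Main.
Variables (R : realFieldType) (lamF lamA a b al be : R).
Hypothesis Hab : al + be = 2^-1.

Local Notation W := (weight lamF lamA a b al be).
Local Notation CP := (chain_prob lamF lamA a b).

Lemma sumOmega n (F : Omega n -> R) :
  \sum_(w : Omega n) F w = \sum_(z : n.-tuple bool) \sum_(s : n.-tuple (bool * bool)) F (z, s).
Proof. by rewrite [RHS]pair_bigA; apply: eq_bigr => -[]. Qed.

Lemma key n (h : nat -> nat -> int -> R) :
  \sum_(w : Omega n) W w * h (Kn w) (cX (take (Kn w) w.2)) (sY (take (Kn w) w.2))
  = \sum_(z : n.-tuple bool) CP z * G al be n (count id z) (h (count id z)).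
Proof.
rewrite sumOmega; apply: eq_bigr => z _; rewrite /G mulr_sumr.
by apply: eq_bigr => s _; rewrite /weight /Kn /= mulrA.
Qed.

Lemma Gconst n k c : G al be n k (fun _ _ => c) = c.
Proof. by rewrite /G -mulr_suml sum_prod // mul1r. Qed.

Lemma sumcond n (E : pred (Omega n)) (g : Omega n -> R) :
  \sum_(w | E w) W w * g w = \sum_w W w * ((E w)%:R * g w).
Proof.
rewrite big_mkcond; apply: eq_bigr => w _.
by case: (E w); rewrite ?mul1r ?mul0r ?mulr0.
Qed.

Lemma fnE n k : fn lamF lamA a b al be n k = \sum_(z : n.-tuple bool) CP z * (count id z == k)%:R.
Proof.
rewrite /fn /Prob.
transitivity (\sum_(w : Omega n) W w * ((fun K (_ : nat) (_ : int) => ((K == k)%:R : R))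
   (Kn w) (cX (take (Kn w) w.2)) (sY (take (Kn w) w.2)))).
  by rewrite big_mkcond; apply: eq_bigr => w _ /=; case: (Kn w == k); rewrite ?mulr1 ?mulr0.
rewrite (key _ (fun K (_ : nat) (_ : int) => ((K == k)%:R : R))); apply: eq_bigr => z _; by rewrite Gconst.
Qed.

Lemma sum_part n (phi : nat -> R) :
  \sum_(z : n.-tuple bool) CP z * phi (count id z)
  = \sum_(k < n.+1) fn lamF lamA a b al be n k * phi k.
Proof.
under [RHS]eq_bigr => k _ do rewrite fnE mulr_suml.
rewrite exchange_big /=; apply: eq_bigr => z _.
have Hz : (count id z < n.+1)%N by rewrite ltnS -[X in (_ <= X)%N](size_tuple z) count_size.
rewrite (bigD1 (Ordinal Hz)) //= eqxx mulr1 big1 ?addr0 // => k Hk.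
rewrite (_ : (count id z == k) = false) ?mulr0 ?mul0r //.
by apply/negbTE; apply: contra Hk => /eqP E; apply/eqP; apply: val_inj.
Qed.


Lemma condsum n (E : pred (Omega n)) (g : Omega n -> R) (h : nat -> nat -> int -> R) :
  (forall w, (E w)%:R * g w = h (Kn w) (cX (take (Kn w) w.2)) (sY (take (Kn w) w.2))) ->
  \sum_(w | E w) W w * g w = \sum_(z : n.-tuple bool) CP z * G al be n (count id z) (h (count id z)).
Proof.
move=> H; rewrite sumcond -(key n h); apply: eq_bigr => w _; by rewrite H.
Qed.

Lemma ProbC n (E : pred (Omega n)) :
  Prob lamF lamA a b al be E = \sum_(w | E w) W w * 1.
Proof. by rewrite /Prob; apply: eq_bigr => w _; rewrite mulr1. Qed.

End Main.

Lemma restrict (R : realFieldType) n x (F : nat -> R) :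
  (forall k, (k < x)%N -> F k = 0) -> (x <= n.+1)%N ->
  \sum_(k < n.+1) F k = \sum_(x <= k < n.+1) F k.
Proof.
move=> HF Hx.
rewrite -(big_mkord xpredT F) (@big_cat_nat _ _ _ x) //= big1_seq ?add0r // => k.
by rewrite mem_index_iota => /andP[_ /andP[_ hk]]; apply: HF.
Qed.

Unset Implicit Arguments.

Theorem proposition4 (R : realFieldType) (lamF lamA a b al be : R)
    (n x : nat) (y : int) :
  0 <= lamF -> 0 <= lamA -> lamF + lamA = 1 ->
  0 <= a <= 1 -> 0 <= b <= 1 ->
  0 <= al -> 0 <= be -> al + be = 2^-1 ->
  (1 <= n)%N -> (x <= n)%N -> - (n%:Z) <= y <= n%:Z ->
  Prob lamF lamA a b al be
      [pred w : Omega n | (SX w == 2 * x%:Z) && (SY w == y)]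
    = \sum_(x <= k < n.+1)
        fn lamF lamA a b al be n k * ('C(k, x))%:R * (binhalf k y)%:R
          * al ^+ x * be ^+ (k - x)
  /\
  (0 < Prob lamF lamA a b al be [pred w : Omega n | SX w == 2 * x%:Z] ->
   condVar lamF lamA a b al be (fun w : Omega n => (SY w)%:~R)
       [pred w : Omega n | SX w == 2 * x%:Z]
     = (\sum_(x <= k < n.+1)
          k%:R * fn lamF lamA a b al be n k * ('C(k, x))%:R
            * (2 * al) ^+ x * (2 * be) ^+ (k - x))
       / (\sum_(x <= k < n.+1)
          fn lamF lamA a b al be n k * ('C(k, x))%:R
            * (2 * al) ^+ x * (2 * be) ^+ (k - x))).
Proof.
move=> _ _ _ _ _ _ _ Hab _ Hx _.
have Hcnt (z : n.-tuple bool) : (count id z <= n)%N.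
  by rewrite -[X in (_ <= X)%N](size_tuple z) count_size.
have eqX (w : Omega n) : (SX w == 2 * x%:Z) = (cX (take (Kn w) w.2) == x).
  by rewrite SXE; apply/eqP/eqP => [H|->] //; lia.
have Hx1 : (x <= n.+1)%N by apply: leqW.
split.
  rewrite ProbC (@condsum R lamF lamA a b al be n _ _ (fun _ c y' => ((c == x) && (y' == y))%:R)); last first.
    by move=> w /=; rewrite eqX SYE mulr1.
  under eq_bigr => z _ do rewrite GA //.
  rewrite (sum_part lamF lamA a b Hab n (fun k => 'C(k, x)%:R * (binhalf k y)%:R * al ^+ x * be ^+ (k - x))).
  rewrite (@restrict R n x (fun k => fn lamF lamA a b al be n k *
     ('C(k, x)%:R * (binhalf k y)%:R * al ^+ x * be ^+ (k - x)))) //; last first.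
    by move=> k hk; rewrite bin_small // !mul0r mulr0.
  by apply: eq_bigr => k _; rewrite !mulrA.
move=> _.
have PE : Prob lamF lamA a b al be [pred w : Omega n | SX w == 2 * x%:Z] =
    \sum_(x <= k < n.+1) fn lamF lamA a b al be n k * ('C(k, x))%:R
            * (2 * al) ^+ x * (2 * be) ^+ (k - x).
  rewrite ProbC (@condsum R lamF lamA a b al be n _ _ (fun _ c _ => (c == x)%:R * 1)); last first.
    by move=> w /=; rewrite eqX.
  under eq_bigr => z _ do rewrite GB //.
  rewrite (sum_part lamF lamA a b Hab n (fun k => 'C(k, x)%:R * (2 * al) ^+ x * (2 * be) ^+ (k - x))).
  rewrite (@restrict R n x (fun k => fn lamF lamA a b al be n k *
     ('C(k, x)%:R * (2 * al) ^+ x * (2 * be) ^+ (k - x)))) //; last first.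
    by move=> k hk; rewrite bin_small // !mul0r mulr0.
  by apply: eq_bigr => k _; rewrite !mulrA.
have N1 : \sum_(w : Omega n | SX w == 2 * x%:Z) weight lamF lamA a b al be w * (SY w)%:~R = 0.
  rewrite (@condsum R lamF lamA a b al be n _ _ (fun _ c y' => (c == x)%:R * y'%:~R)); last first.
    by move=> w /=; rewrite eqX SYE.
  by rewrite big1 // => z _; rewrite GDz // mulr0.
have N2 : \sum_(w : Omega n | SX w == 2 * x%:Z) weight lamF lamA a b al be w * ((SY w)%:~R) ^+ 2
   = \sum_(x <= k < n.+1)
          k%:R * fn lamF lamA a b al be n k * ('C(k, x))%:R
            * (2 * al) ^+ x * (2 * be) ^+ (k - x).
  rewrite (@condsum R lamF lamA a b al be n _ _ (fun _ c y' => (c == x)%:R * (y'%:~R) ^+ 2)); last first.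
    by move=> w /=; rewrite eqX SYE.
  under eq_bigr => z _ do rewrite GC // GB //.
  rewrite (sum_part lamF lamA a b Hab n (fun k => k%:R * ('C(k, x)%:R * (2 * al) ^+ x * (2 * be) ^+ (k - x)))).
  rewrite (@restrict R n x (fun k => fn lamF lamA a b al be n k *
     (k%:R * ('C(k, x)%:R * (2 * al) ^+ x * (2 * be) ^+ (k - x))))) //; last first.
    by move=> k hk; rewrite bin_small // !mul0r !mulr0.
  by apply: eq_bigr => k _; rewrite !mulrA [_ * k%:R]mulrC.
rewrite /condVar /condE /= N1 N2 PE mul0r expr0n /= subr0.
by [].
Qed.
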